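(* Let $(X,Y,\phi)$ be an $L$-context and $X'\subseteq X$, $Y'\subseteq Y$, and let $S_1,S_2\colon\mathcal{K}\phi\to\mathcal{K}\phi_{X',Y'}$ and $F_1,F_2\colon\mathcal{K}\phi_{X',Y'}\to\mathcal{K}\phi$ be the maps $S_1\mu=(\phi_{X',Y'})^\forall(\phi_{X',Y'})^\exists\mu_{X'}$, $S_2\mu=\big((\phi_{X,Y'})^\forall(\phi_{X,Y'})^\exists\mu\big)_{X'}$, $F_1\mu'=\phi^\forall\phi^\exists\underline{\mu'}$, $F_2\mu'=(\phi_{X,Y'})^\forall(\phi_{X,Y'})^\exists\underline{\mu'}$. Then: (1) $(F_1\mu')_{X'}=(F_2\mu')_{X'}$ for all $\mu'\in\mathcal{K}\phi_{X',Y'}$; (2) each of the composites $S_1F_1$, $S_1F_2$, $S_2F_1$, $S_2F_2$ equals the identity map of $\mathcal{K}\phi_{X',Y'}$.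
   Context: $L=(L,* )$ is a complete residuated lattice: a complete lattice with bottom $0$ and top $1$, equipped with a commutative associative operation $*$ with unit $1$ satisfying $a*\bigvee_i b_i=\bigvee_i a*b_i$; $\to$ is its residuum ($a*b\le c\iff a\le b\to c$). An $L$-context is a triple $(X,Y,\phi)$ with $X,Y$ sets and $\phi\colon X\times Y\to L$. $L^X$ is the set of maps $X\to L$ with $L$-order $L^X(\mu,\mu')=\bigwedge_{x}(\mu(x)\to\mu'(x))$. $(\phi^\exists\mu)(y)=\bigvee_{x\in X}\mu(x)*\phi(x,y)$ for $\mu\in L^X$, and $(\phi^\forall\lambda)(x)=\bigwedge_{y\in Y}(\phi(x,y)\to\lambda(y))$ for $\lambda\in L^Y$. $\mathcal{K}\phi=\{\mu\in L^X\mid\phi^\forall\phi^\exists\mu=\mu\}$. For $X'\subseteq X$, $Y'\subseteq Y$, $\phi_{X',Y'}$ is the restriction of $\phi$ to $X'\times Y'$ (an $L$-context $(X',Y',\phi_{X',Y'})$); $\mu_{X'}$ is the restriction of $\mu\in L^X$ to $X'$; for $\mu'\in L^{X'}$, $\underline{\mu'}\in L^X$ is the extension of $\mu'$ by $0$ outside $X'$. (The maps $S_i,F_i$ are well defined with the stated domains and codomains.) *)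

(* Defs.v *)
From Stdlib Require Import ClassicalEpsilon.

Record crl := CRL {
  car :> Type;
  le : car -> car -> Prop;
  le_refl : forall a, le a a;
  le_trans : forall a b c, le a b -> le b c -> le a c;
  le_antisym : forall a b, le a b -> le b a -> a = b;
  sup : (car -> Prop) -> car;
  sup_ub : forall (S : car -> Prop) a, S a -> le a (sup S);
  sup_least : forall (S : car -> Prop) b, (forall a, S a -> le a b) -> le (sup S) b;
  inf : (car -> Prop) -> car;
  inf_lb : forall (S : car -> Prop) a, S a -> le (inf S) a;
  inf_greatest : forall (S : car -> Prop) b, (forall a, S a -> le b a) -> le b (inf S);
  bot : car;
  top : car;
  bot_le : forall a, le bot a;
  le_top : forall a, le a top;
  mul : car -> car -> car;
  mulC : forall a b, mul a b = mul b a;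
  mulA : forall a b c, mul a (mul b c) = mul (mul a b) c;
  mul1 : forall a, mul top a = a;
  mul_sup : forall a (S : car -> Prop),
      mul a (sup S) = sup (fun c => exists b, S b /\ c = mul a b);
  res : car -> car -> car;
  residuation : forall a b c, le (mul a b) c <-> le a (res b c)
}.

Arguments sup {_} S.
Arguments inf {_} S.
Arguments bot {_}.
Arguments mul {_} a b.
Arguments res {_} a b.

Section Ops.
Context {L : crl}.

Definition phiE {A B : Type} (phi : A -> B -> L) (mu : A -> L) : B -> L :=
  fun y => sup (fun c => exists x, c = mul (mu x) (phi x y)).

Definition phiA {A B : Type} (phi : A -> B -> L) (lam : B -> L) : A -> L :=
  fun x => inf (fun c => exists y, c = res (phi x y) (lam y)).

Definition inK {A B : Type} (phi : A -> B -> L) (mu : A -> L) : Prop :=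
  phiA phi (phiE phi mu) = mu.

Definition sub {X : Type} (X' : X -> Prop) := {x : X | X' x}.

Definition restr {X Y : Type} (phi : X -> Y -> L) (X' : X -> Prop) (Y' : Y -> Prop)
  : sub X' -> sub Y' -> L := fun x y => phi (proj1_sig x) (proj1_sig y).
Definition restrY {X Y : Type} (phi : X -> Y -> L) (Y' : Y -> Prop)
  : X -> sub Y' -> L := fun x y => phi x (proj1_sig y).

Definition restrF {X : Type} (X' : X -> Prop) (mu : X -> L) : sub X' -> L :=
  fun x => mu (proj1_sig x).

Definition ext0 {X : Type} (X' : X -> Prop) (mu' : sub X' -> L) : X -> L :=
  fun x => match excluded_middle_informative (X' x) with
           | left h => mu' (exist _ x h)
           | right _ => bot
           end.

Definition S1 {X Y : Type} (phi : X -> Y -> L) (X' : X -> Prop) (Y' : Y -> Prop)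
  (mu : X -> L) : sub X' -> L :=
  phiA (restr phi X' Y') (phiE (restr phi X' Y') (restrF X' mu)).
Definition S2 {X Y : Type} (phi : X -> Y -> L) (X' : X -> Prop) (Y' : Y -> Prop)
  (mu : X -> L) : sub X' -> L :=
  restrF X' (phiA (restrY phi Y') (phiE (restrY phi Y') mu)).
Definition F1 {X Y : Type} (phi : X -> Y -> L) (X' : X -> Prop) (Y' : Y -> Prop)
  (mu' : sub X' -> L) : X -> L :=
  phiA phi (phiE phi (ext0 X' mu')).
Definition F2 {X Y : Type} (phi : X -> Y -> L) (X' : X -> Prop) (Y' : Y -> Prop)
  (mu' : sub X' -> L) : X -> L :=
  phiA (restrY phi Y') (phiE (restrY phi Y') (ext0 X' mu')).

End Ops.

(* Main.v *)
Require Import Defs.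
From Stdlib Require Import FunctionalExtensionality ProofIrrelevance ClassicalEpsilon.

Section Gen.
Context {L : crl}.

Definition leF {A : Type} (f g : A -> L) := forall x, le L (f x) (g x).

Lemma leF_antisym {A : Type} (f g : A -> L) : leF f g -> leF g f -> f = g.
Proof. intros H1 H2; apply functional_extensionality; intro x; apply le_antisym; auto. Qed.

Lemma leF_trans {A : Type} (f g h : A -> L) : leF f g -> leF g h -> leF f h.
Proof. intros H1 H2 x; eapply le_trans; eauto. Qed.

Lemma leF_refl {A : Type} (f : A -> L) : leF f f.
Proof. intro; apply le_refl. Qed.

Lemma galois {A B : Type} (chi : A -> B -> L) mu lam :
  leF (phiE chi mu) lam <-> leF mu (phiA chi lam).
Proof.
  split; intros H.
  - intro x. unfold phiA. apply inf_greatest. intros c [y ->].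
    apply residuation. eapply le_trans; [| apply (H y)].
    unfold phiE. apply sup_ub. eauto.
  - intro y. unfold phiE. apply sup_least. intros c [x ->].
    apply residuation. eapply le_trans; [apply (H x)|].
    unfold phiA. apply inf_lb. eauto.
Qed.

Lemma cl_ext {A B : Type} (chi : A -> B -> L) mu : leF mu (phiA chi (phiE chi mu)).
Proof. apply galois, leF_refl. Qed.

Lemma counit {A B : Type} (chi : A -> B -> L) lam : leF (phiE chi (phiA chi lam)) lam.
Proof. apply galois, leF_refl. Qed.

Lemma E_mono {A B : Type} (chi : A -> B -> L) mu nu : leF mu nu -> leF (phiE chi mu) (phiE chi nu).
Proof. intros H; apply galois. eapply leF_trans; [exact H| apply cl_ext]. Qed.

Lemma A_mono {A B : Type} (chi : A -> B -> L) l l' : leF l l' -> leF (phiA chi l) (phiA chi l').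
Proof. intros H; apply galois. eapply leF_trans; [apply counit| exact H]. Qed.

Lemma cl_mono {A B : Type} (chi : A -> B -> L) mu nu : leF mu nu ->
  leF (phiA chi (phiE chi mu)) (phiA chi (phiE chi nu)).
Proof. intros H; apply A_mono, E_mono, H. Qed.

Lemma cl_idem {A B : Type} (chi : A -> B -> L) mu :
  phiA chi (phiE chi (phiA chi (phiE chi mu))) = phiA chi (phiE chi mu).
Proof.
  apply leF_antisym.
  - apply A_mono, counit.
  - apply cl_ext.
Qed.

End Gen.

Theorem mainTheorem2 (L : crl) (X Y : Type) (phi : X -> Y -> L)
    (X' : X -> Prop) (Y' : Y -> Prop) :
  (forall mu' : sub X' -> L, inK (restr phi X' Y') mu' ->
     restrF X' (F1 phi X' Y' mu') = restrF X' (F2 phi X' Y' mu')) /\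
  (forall mu' : sub X' -> L, inK (restr phi X' Y') mu' ->
     S1 phi X' Y' (F1 phi X' Y' mu') = mu' /\
     S1 phi X' Y' (F2 phi X' Y' mu') = mu' /\
     S2 phi X' Y' (F1 phi X' Y' mu') = mu' /\
     S2 phi X' Y' (F2 phi X' Y' mu') = mu').
Proof.
  assert (Hext : forall (mu' : sub X' -> L) (x' : sub X'), ext0 X' mu' (proj1_sig x') = mu' x').
  { intros mu' [x hx]. unfold ext0; simpl.
    destruct (excluded_middle_informative (X' x)) as [h|n].
    - f_equal. f_equal. apply proof_irrelevance.
    - contradiction. }
  assert (EE : forall mu' : sub X' -> L, phiE (restrY phi Y') (ext0 X' mu') = phiE (restr phi X' Y') mu').
  { intros mu'. apply leF_antisym; intro y; unfold phiE.
    - apply sup_least. intros c [x ->]. unfold ext0.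
      destruct (excluded_middle_informative (X' x)) as [h|n].
      + apply sup_ub. exists (exist _ x h). reflexivity.
      + apply residuation. apply bot_le.
    - apply sup_least. intros c [x' ->]. apply sup_ub. exists (proj1_sig x').
      rewrite Hext. reflexivity. }
  assert (HF2 : forall mu', inK (restr phi X' Y') mu' -> restrF X' (F2 phi X' Y' mu') = mu').
  { intros mu' hK. unfold F2. rewrite EE. exact hK. }
  assert (F1F2 : forall mu', leF (F1 phi X' Y' mu') (F2 phi X' Y' mu')).
  { intros mu' x. unfold F1, F2, phiA. apply inf_greatest. intros c [y ->].
    apply inf_lb. exists (proj1_sig y). reflexivity. }
  assert (HF1 : forall mu', inK (restr phi X' Y') mu' -> restrF X' (F1 phi X' Y' mu') = mu').
  { intros mu' hK. apply leF_antisym.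
    - rewrite <- (HF2 mu' hK) at 2. intro x'. apply F1F2.
    - intro x'. rewrite <- Hext. apply (cl_ext phi (ext0 X' mu')). }
  split.
  - intros mu' hK. rewrite HF1, HF2; auto.
  - intros mu' hK. unfold S1, S2. rewrite HF1, HF2 by exact hK.
    assert (Hcl : phiA (restrY phi Y') (phiE (restrY phi Y') (F1 phi X' Y' mu'))
                  = F2 phi X' Y' mu').
    { apply leF_antisym.
      - eapply leF_trans; [apply cl_mono, F1F2|]. unfold F2. rewrite cl_idem. apply leF_refl.
      - unfold F2 at 1. apply cl_mono. apply (cl_ext phi). }
    assert (Hid : phiA (restrY phi Y') (phiE (restrY phi Y') (F2 phi X' Y' mu'))
                  = F2 phi X' Y' mu') by (unfold F2; apply cl_idem).
    rewrite Hcl, Hid, HF2 by exact hK.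
    repeat split; exact hK.
Qed.
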